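(* Assume the setting below and fix $m\in\mathbb{N}$. Let $r=r_m$ be such that the matrix $\mathbf{M}=(P^t(0,j))_{1\le t\le r,0\le j\le m}$ has rank $m+1$. Then for every $k\in\mathbb{N}$ there is a real matrix $A_k$ (with rows indexed by $\{0,\dots,m\}^k$ and columns by $\{1,\dots,r\}^k$), depending only on $q,m,k$, such that for every stochastic scenery $\eta$ with $\ell\le m$ and every bounded measurable $\phi$ with $\int_{\mathbb{R}}\phi\,d\alpha=0$, $$\mathbf{Q}^k(\phi)=A_k\,\mathbf{p}^k(\phi).$$ (One may take $A_k$ to be a left inverse of the $k$-fold tensor power $\mathbf{M}^{\otimes k}$.)
   Context: Setting: $q$ is a probability mass function on $\mathbb{Z}$ with $\sum_z zq(z)=0$, $\sum_z z^2q(z)<\infty$, $q(z)=q(-z)$ for all $z$, $\gcd\{n\ge1:q^{*n}(0)>0\}=1$, and support generating $\mathbb{Z}$; $S$ is the random walk with increment law $q$, $P^t(z,w)=P[S_t=w\mid S_0=z]$. $\alpha\in\mathcal{P}(\mathbb{R})$ is a reference measure, and a stochastic scenery $\eta:\mathbb{Z}\to\mathcal{P}(\mathbb{R})$ with $\eta(z)\neq\alpha$ for at least one and at most finitely many $z$; the observations $(X_n)$ are, conditionally on $S$, independent with law $\eta(S_n)$. Let $a=\min\{j:\eta(j)\neq\alpha\}$, $b=\max\{j:\eta(j)\neq\alpha\}$, $\ell=b-a$. For bounded measurable $\phi$, $\langle\phi\rangle_z=\int_{\mathbb{R}}\phi\,d\eta(z)$. For $\mathbf{t}=(t_1,\dots,t_k)\in\mathbb{N}^k$,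 $p_{\mathbf{t}}(\phi)=\sum_{z\in\mathbb{Z}}E[\phi(X_0)\phi(X_{t_1})\cdots\phi(X_{t_1+\cdots+t_k})\mid S_0=z]$, and $\mathbf{p}^k(\phi)$ is the vector $(p_{\mathbf{t}}(\phi))_{\mathbf{t}\in\{1,\dots,r\}^k}$. For $\mathbf{d}=(d_1,\dots,d_k)\in\{0,1,\dots,m\}^k$, $$Q^k_{\mathbf{d}}(\phi)=\sum_{\substack{(z_1,\dots,z_{k+1})\in\mathbb{Z}^{k+1}\\ |z_{j+1}-z_j|=d_j,\ j=1,\dots,k}}\langle\phi\rangle_{z_1}\langle\phi\rangle_{z_2}\cdots\langle\phi\rangle_{z_{k+1}},$$ and $\mathbf{Q}^k(\phi)=(Q^k_{\mathbf{d}}(\phi))_{\mathbf{d}\in\{0,\dots,m\}^k}$. *)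

(* Defs.v *)
From HB Require Import structures.
From mathcomp Require Import all_boot all_order all_algebra.
From mathcomp Require Import all_classical all_reals all_analysis.
Set Implicit Arguments. Unset Strict Implicit. Unset Printing Implicit Defensive.
Import Order.TTheory GRing.Theory Num.Theory.
Import numFieldNormedType.Exports.
Local Open Scope classical_set_scope.
Local Open Scope ring_scope.

Section Defs.
Variable R : realType.

Definition zpartial (f : int -> R) (N : nat) : R :=
  \sum_(0 <= i < (N.*2).+1) f (i%:Z - N%:Z).

Definition zsum (f : int -> R) : R := limn (zpartial f).

Definition zsummable (f : int -> R) : Prop := cvgn (zpartial f).

Fixpoint qconv (q : int -> R) (n : nat) (z : int) : R :=
  match n with
  | 0 => (z == 0)%:R
  | n'.+1 => zsum (fun y => qconv q n' y * q (z - y))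
  end.

(* transition probability P^t(z,w) = P[S_t = w | S_0 = z] of the walk *)
Definition Ptrans (q : int -> R) (t : nat) (z w : int) : R := qconv q t (w - z).

Definition walk_law (q : int -> R) : Prop :=
  [/\ (forall z, 0 <= q z) /\ zsum q = 1,
      zsummable (fun z => (z ^+ 2)%:~R * q z) ,
      zsum (fun z => z%:~R * q z) = 0,
      (forall z, q z = q (- z)) &
      [/\ (* gcd {n >= 1 : q^{*n}(0) > 0} = 1 *)
          (forall d : nat, (forall n : nat, (0 < n)%N -> 0 < qconv q n 0 -> (d %| n)%N) -> d = 1%N) &
          (* the support of q generates Z as an additive group *)
          (forall G : int -> Prop, G 0 -> (forall x y, G x -> G y -> G (x - y)) ->
             (forall z, 0 < q z -> G z) -> forall z, G z)]].

(* the matrix M = (P^t(0,j))_{1<=t<=r, 0<=j<=m}; row i stands for t = i+1 *)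
Definition Mmat (q : int -> R) (m r : nat) : 'M[R]_(r, m.+1) :=
  \matrix_(i < r, j < m.+1) Ptrans q i.+1 0 j%:Z.

Definition bracket (eta : int -> probability R R) (phi : R -> R) (z : int) : R :=
  Rintegral (eta z) setT phi.

Definition scenery_width_le (alpha : probability R R)
    (eta : int -> probability R R) (m : nat) : Prop :=
  exists a b : int,
    [/\ (eta a : set R -> \bar R) <> alpha,
        (eta b : set R -> \bar R) <> alpha,
        (forall j, (eta j : set R -> \bar R) <> alpha -> a <= j <= b) &
        b - a <= m%:Z].

(* E[ phi(X_0) phi(X_{t_1}) ... phi(X_{t_1+...+t_k}) | S_0 = z ]:
   by the Markov property of S and conditional independence of the X_n
   given S, this is
   sum_{w_1,...,w_k} prod P^{t_i}(w_{i-1},w_i) prod_{i=0}^k <phi>_{w_i},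
   with w_0 = z. *)
Fixpoint cond_moment (q : int -> R) (eta : int -> probability R R)
    (phi : R -> R) (ts : seq nat) (z : int) : R :=
  bracket eta phi z *
  match ts with
  | [::] => 1
  | t :: ts' => zsum (fun w => Ptrans q t z w * cond_moment q eta phi ts' w)
  end.

(* p_t(phi) for t = (t_1,...,t_k) in {1,...,r}^k (ordinal i stands for i+1) *)
Definition pk (q : int -> R) (eta : int -> probability R R) (phi : R -> R)
    (k r : nat) (t : {ffun 'I_k -> 'I_r}) : R :=
  zsum (cond_moment q eta phi [seq (t i).+1 | i <- enum 'I_k]).

Fixpoint Qsum (eta : int -> probability R R) (phi : R -> R)
    (ds : seq nat) (z : int) : R :=
  bracket eta phi z *
  match ds with
  | [::] => 1
  | d :: ds' => zsum (fun w => if `|w - z|%N == d then Qsum eta phi ds' w else 0)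
  end.

Definition Qk (eta : int -> probability R R) (phi : R -> R)
    (k m : nat) (d : {ffun 'I_k -> 'I_m.+1}) : R :=
  zsum (Qsum eta phi [seq (d i : nat) | i <- enum 'I_k]).

End Defs.

(* Main.v *)
Require Import Defs.
From HB Require Import structures.
From mathcomp Require Import all_boot all_order all_algebra.
From mathcomp Require Import all_classical all_reals all_analysis.
From mathcomp Require Import zify.
Import Order.TTheory GRing.Theory Num.Theory.
Import numFieldNormedType.Exports.
Local Open Scope classical_set_scope.
Local Open Scope ring_scope.
Section S.
Variable R : realType.

Lemma zpartialS (f : int -> R) n :
  zpartial f n.+1 = f (- (n.+1)%:Z) + zpartial f n + f (n.+1)%:Z.
Proof.
rewrite /zpartial doubleS big_nat_recl // big_nat_recr //=.
rewrite addrA; congr (_ + _ + _).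
- by congr f; lia.
- by apply: eq_bigr => i _; congr f; lia.
- by congr f; lia.
Qed.

Lemma zsum_fin (f : int -> R) (B : nat) :
  (forall x, f x != 0 -> - B%:Z <= x <= B%:Z) ->
  zsum f = \sum_(i < (B.*2).+1) f (i%:Z - B%:Z).
Proof.
move=> hf.
have f0 x : (x < - B%:Z) || (B%:Z < x) -> f x = 0.
  move=> hx; apply/eqP; apply: contraTT hx => /hf.
  by rewrite negb_or -!leNgt => /andP[-> ->].
have stab k : zpartial f (B + k) = zpartial f B.
  elim: k => [|k IH]; first by rewrite addn0.
  rewrite addnS zpartialS IH !f0 ?addr0 ?add0r //; apply/orP.
  - by right; lia.
  - by left; lia.
rewrite /zsum -(big_mkord xpredT (fun i => f (i%:Z - B%:Z))) -/(zpartial f B).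
apply: cvg_lim => //; apply: cvg_near_cst; exists B => // n /= hn.
by rewrite -(subnKC hn) stab.
Qed.

Lemma zpartial_opp (f : int -> R) n : zpartial (fun x => f (- x)) n = zpartial f n.
Proof.
rewrite /zpartial big_nat_rev; apply: eq_big_nat => i /andP[_ hi].
by congr f; lia.
Qed.


Lemma qconv_sym (q : int -> R) (hs : forall z, q z = q (- z)) n z :
  qconv q n (- z) = qconv q n z.
Proof.
elim: n z => [|n IH] z /=; first by rewrite oppr_eq0.
have ext (f g : int -> R) : (forall n, zpartial f n = zpartial g n) -> zsum f = zsum g.
  by move=> H; rewrite /zsum (funext H).
apply: ext => n0.
rewrite -[RHS]zpartial_opp; congr zpartial; apply: funext => y.
by rewrite IH hs; congr (_ * q _); lia.
Qed.

Variables (c : int -> R) (B : nat).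
Local Notation NN := (B.*2).+1.
Definition emb (i : 'I_NN) : int := i%:Z - B%:Z.
Definition Kmat (F : int -> int -> R) : 'M[R]_NN :=
  \matrix_(u, v) (c (emb u) * F (emb u) (emb v) * (c (emb v) != 0)%:R).
Definition cvec : 'cV[R]_NN := \col_u c (emb u).

Lemma Gmat (T : Type) (K : T -> int -> int -> R) (G : seq T -> int -> R) :
  (forall x, c x != 0 -> - B%:Z <= x <= B%:Z) ->
  (forall z, G [::] z = c z) ->
  (forall a s z, G (a :: s) z = c z * zsum (fun w => K a z w * G s w)) ->
  forall s (i : 'I_NN), G s (emb i) = ((\prod_(a <- s) Kmat (K a)) *m cvec) i 0.
Proof.
move=> hc h0 h1.
have Gs s w : G s w != 0 -> c w != 0.
  case: s => [|a s]; rewrite ?h0 ?h1 //; apply: contraNN => /eqP ->; by rewrite mul0r.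
elim=> [|a s IH] i.
  by rewrite big_nil mul1mx mxE h0.
rewrite big_cons.
have -> : Kmat (K a) * \prod_(j <- s) Kmat (K j) = Kmat (K a) *m \prod_(j <- s) Kmat (K j).
  by rewrite mulmxE.
rewrite -mulmxA mxE h1 (@zsum_fin _ B); last first.
  move=> x hx; apply: hc; apply: (Gs s); apply: contraNN hx => /eqP ->; by rewrite mulr0.
rewrite big_distrr /=; apply: eq_bigr => j _.
rewrite -IH mxE.
case: (eqVneq (c (emb j)) 0) => [e|ne].
  have -> : G s (emb j) = 0 by case: (eqVneq (G s (emb j)) 0) => // /Gs; rewrite e eqxx.
  by rewrite !mulr0.
by rewrite /emb /= mulr1 mulrA.
Qed.

Definition Val (X : 'M[R]_NN) : R := \sum_i (X *m cvec) i 0.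

Lemma Val_sum (I : finType) (F : I -> 'M[R]_NN) : Val (\sum_f F f) = \sum_f Val (F f).
Proof.
rewrite /Val mulmx_suml; under eq_bigr do rewrite summxE.
exact: exchange_big.
Qed.

Lemma Val_scale a X : Val (a *: X) = a * Val X.
Proof.
rewrite /Val -scalemxAl; under eq_bigr do rewrite mxE.
by rewrite mulr_sumr.
Qed.

Lemma prod_scale (I : Type) (s : seq I) (a : I -> R) (X : I -> 'M[R]_NN) :
  \prod_(i <- s) (a i *: X i) = (\prod_(i <- s) a i) *: \prod_(i <- s) X i.
Proof.
elim: s => [|x s IH]; first by rewrite !big_nil scale1r.
by rewrite !big_cons IH -scalerAl -scalerAr scalerA.
Qed.

Lemma combine m r (L : 'M[R]_(m.+1, r)) (M : 'M[R]_(r, m.+1))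
  (Y : 'I_m.+1 -> 'M[R]_NN) (X : 'I_r -> 'M[R]_NN) :
  L *m M = 1%:M -> (forall s, X s = \sum_j M s j *: Y j) ->
  forall e, \sum_s L e s *: X s = Y e.
Proof.
move=> hLM hX e.
under eq_bigr do rewrite hX scaler_sumr.
rewrite exchange_big /=.
transitivity (\sum_j (L *m M) e j *: Y j).
  apply: eq_bigr => j _; rewrite mxE scaler_suml; apply: eq_bigr => s _.
  by rewrite scalerA.
rewrite hLM (bigD1 e) //= big1 ?addr0 => [|j hj].
  by rewrite mxE eqxx mulr1n scale1r.
by rewrite mxE eq_sym (negbTE hj) mulr0n scale0r.
Qed.

Lemma qconv_abs (q : int -> R) (hs : forall z, q z = q (- z)) n x :
  qconv q n x = qconv q n (`|x|%N)%:Z.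
Proof.
case: x => k //=.
by rewrite NegzE qconv_sym.
Qed.

Lemma XY (q : int -> R) (hs : forall z, q z = q (- z)) m r
  (hc2 : forall x y, c x != 0 -> c y != 0 -> (absz (y - x) <= m)%N) (i : 'I_r) :
  Kmat (Ptrans q i.+1) =
  \sum_(j < m.+1) Mmat q m r i j *: Kmat (fun z w => (`|w - z|%N == j)%:R).
Proof.
apply/matrixP => u v; rewrite summxE !mxE.
under eq_bigr do rewrite !mxE.
case: (eqVneq (c (emb v)) 0) => [e|ne].
  by rewrite /= !mulr0 big1 // => j _; rewrite /= !mulr0.
case: (eqVneq (c (emb u)) 0) => [e|ne'].
  by rewrite e !mul0r big1 // => j _; rewrite !mul0r mulr0.
have hd : (absz (emb v - emb u) < m.+1)%N by rewrite ltnS hc2.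
rewrite (bigD1 (Ordinal hd)) //= big1 ?addr0 => [|j hj]; last first.
  have -> : (`|emb v - emb u|%N == j) = false.
    apply/negbTE; apply: contra hj => /eqP e; apply/eqP/val_inj => /=; exact: esym e.
  by rewrite mulr0 mul0r mulr0.
rewrite eqxx /= !mulr1 /Ptrans subr0 -(qconv_abs q hs).
by rewrite mulrC.
Qed.
End S.

Theorem proposition3p3 (R : realType) (q : int -> R) (hq : walk_law q)
    (m r : nat) (hM : \rank (Mmat q m r) = m.+1) (k : nat) :
  exists A : {ffun 'I_k -> 'I_m.+1} -> {ffun 'I_k -> 'I_r} -> R,
    forall (alpha : probability R R) (eta : int -> probability R R)
           (phi : R -> R),
      scenery_width_le alpha eta m ->
      measurable_fun setT phi ->
      (exists M : R, forall x, `|phi x| <= M) ->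
      Rintegral alpha setT phi = 0 ->
      forall d : {ffun 'I_k -> 'I_m.+1},
        Qk eta phi d = \sum_(t : {ffun 'I_k -> 'I_r}) A d t * pk q eta phi t.
Proof.
have /row_fullP [L hL] : row_full (Mmat q m r) by rewrite /row_full hM.
case: hq => _ _ _ hs _.
exists (fun d t => \prod_(i < k) L (d i) (t i)).
move=> alpha eta phi [a [b [ha hb hw hab]]] _ _ h0 d.
set c := bracket eta phi.
have csupp x : c x != 0 -> a <= x <= b.
  move=> hx; apply: hw => heq; move/eqP: hx; apply.
  rewrite /c /bracket /Rintegral (eq_measure_integral alpha); first exact: h0.
  by move=> A _ _; exact: (f_equal (fun f : set R -> \bar R => f A) heq).
pose B := (absz a + absz b)%N.
have hc x : c x != 0 -> - B%:Z <= x <= B%:Z.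
  move=> /csupp; rewrite /B; lia.
have hc2 x y : c x != 0 -> c y != 0 -> (absz (y - x) <= m)%N.
  move=> /csupp hx /csupp hy; lia.
pose X (s : 'I_r) := Kmat R c B (Ptrans q s.+1).
pose Y (j : 'I_m.+1) := Kmat R c B (fun z w => (`|w - z|%N == j)%:R).
have hpk t : pk q eta phi t = Val R c B (\prod_(i < k) X (t i)).
  rewrite /pk (@zsum_fin R _ B); last first.
    move=> x; case: [seq _ | _ <- _] => [|? ?] /= hx; apply: hc;
      by apply: contraNN hx => /eqP; rewrite /c => ->; rewrite mul0r.
  rewrite /Val; apply: eq_bigr => i _.
  rewrite (@Gmat R c B nat (fun t => Ptrans q t) (cond_moment q eta phi)) //.
  - by rewrite big_map enumT.
  - by move=> z /=; rewrite mulr1.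
have hQk : Qk eta phi d = Val R c B (\prod_(i < k) Y (d i)).
  rewrite /Qk (@zsum_fin R _ B); last first.
    move=> x; case: [seq _ | _ <- _] => [|? ?] /= hx; apply: hc;
      by apply: contraNN hx => /eqP; rewrite /c => ->; rewrite mul0r.
  rewrite /Val; apply: eq_bigr => i _.
  rewrite (@Gmat R c B nat (fun j z w => (`|w - z|%N == j)%:R) (Qsum eta phi)) //.
  - by rewrite big_map enumT.
  - by move=> z /=; rewrite mulr1.
  - move=> j s z /=; congr (_ * zsum _); apply: funext => w.
    by case: ifP => _; rewrite ?mul1r ?mul0r.
under eq_bigr do rewrite hpk -(@Val_scale R c B) -prod_scale.
rewrite -(@Val_sum R c B) -(bigA_distr_bigA (fun i s => L (d i) s *: X s)) hQk.
congr (Val R c B _); apply: eq_bigr => i _.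
have hcomb := @combine R B m r L (Mmat q m r) Y X hL.
rewrite hcomb //.
move=> s; exact: (@XY R c B q hs _ _ hc2).
Qed.
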